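(* Let $G$ be a graph, $t\in\mathbb{N}$, and let $x,y\in V(G)$ be distinct non-adjacent vertices such that $G$ contains $t+3$ pairwise internally vertex-disjoint paths between $x$ and $y$. Then $(G,t)$ has a solution if and only if $(G+xy,t)$ has a solution, where $G+xy$ is $G$ with the edge $xy$ added.
   Context: A solution for $(G,t)$ is a set $S\subseteq V(G)$ with $|S|\le t$ and $\mathrm{tw}(G-S)\le 2$, where $\mathrm{tw}$ is treewidth. *)

(* Defs.v *)
From mathcomp Require Import all_boot.
Set Implicit Arguments. Unset Strict Implicit. Unset Printing Implicit Defensive.

Definition simple_graph (T : finType) (e : rel T) : Prop :=
  symmetric e /\ irreflexive e.

(* A finite tree: nonempty, connected, with exactly |I|-1 (undirected) edges. *)
Definition is_tree (I : finType) (te : rel I) : Prop :=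
  [/\ symmetric te, irreflexive te, 0 < #|I|,
      (forall i j : I, connect te i j) &
      #|[set p : I * I | te p.1 p.2]| = 2 * (#|I| - 1)].

(* Treewidth of the subgraph of (T, e) induced by the vertex set V is at most k. *)
Definition tw_le (T : finType) (e : rel T) (V : {set T}) (k : nat) : Prop :=
  exists (I : finType) (te : rel I) (bag : I -> {set T}),
    is_tree te /\
    [/\ (forall i, bag i \subset V),
        (forall v, v \in V -> exists i, v \in bag i),
        (forall u v, u \in V -> v \in V -> e u v ->
            exists i, (u \in bag i) && (v \in bag i)),
        (forall v i j, v \in bag i -> v \in bag j ->
            connect [rel a b | te a b && (v \in bag a) && (v \in bag b)] i j) &
        (forall i, #|bag i| <= k.+1)].

(* (G, t) has a solution: some S with |S| <= t and tw(G - S) <= 2. *)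
Definition has_solution (T : finType) (e : rel T) (t : nat) : Prop :=
  exists S : {set T}, #|S| <= t /\ tw_le e (~: S) 2.

Definition add_edge (T : finType) (e : rel T) (x y : T) : rel T :=
  [rel u v | [|| e u v, (u == x) && (v == y) | (u == y) && (v == x)]].

(* s is the sequence of internal vertices of an x-y path in e *)
Definition xy_path (T : finType) (e : rel T) (x y : T) (s : seq T) : Prop :=
  path e x (rcons s y) /\ uniq (x :: rcons s y).

Definition m_disjoint_paths (T : finType) (e : rel T) (x y : T) (m : nat) : Prop :=
  exists P : 'I_m -> seq T,
    (forall i, xy_path e x y (P i)) /\
    (forall i j, i != j -> forall v, v \in P i -> v \notin P j).

(* Main.v *)
Require Import Defs.
From mathcomp Require Import all_boot.
Set Implicit Arguments. Unset Strict Implicit. Unset Printing Implicit Defensive.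

Section Cut.
Variables (I : finType).

Lemma conn_edges (r : rel I) (r0 : I) : symmetric r -> (forall u w, connect r u w) ->
  2 * (#|I| - 1) <= #|[set p : I * I | r p.1 p.2]|.
Proof.
move=> rsym rcon.
have exP v : exists n, [exists p : n.-tuple I, path r r0 p && (last r0 p == v)].
  have /connectP[p pp lp] := rcon r0 v; exists (size p); apply/existsP.
  by exists (in_tuple p); rewrite /= pp -lp eqxx.
pose D v := ex_minn (exP v).
have Dpar v : v != r0 -> exists u, r u v && (D u < D v).
  move=> vr0; rewrite /D; case: (ex_minnP (exP v)) => n /existsP[p /andP[pp /eqP lp]] minn.
  have := size_tuple p; move: pp lp; move: (tval p) => s; case/lastP: s => [|q w].
    by move=> _ /= lp; rewrite lp eqxx in vr0.
  rewrite rcons_path last_rcons size_rcons => /andP[pq rw] <- <-.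
  exists (last r0 q); rewrite rw /=.
  have : ex_minn (exP (last r0 q)) <= size q.
    case: (ex_minnP (exP (last r0 q))) => m _ hm; apply: hm; apply/existsP.
    by exists (in_tuple q); rewrite /= pq eqxx.
  by [].
pose par v := odflt r0 [pick u | r u v && (D u < D v)].
have parP v : v != r0 -> r (par v) v && (D (par v) < D v).
  move=> vr0; rewrite /par; case: pickP => [u // | none].
  by have [u hu] := Dpar v vr0; rewrite none in hu.
pose A := [set (par v, v) | v in [set~ r0]].
pose B := [set (v, par v) | v in [set~ r0]].
have cA : #|A| = #|I|.-1 by rewrite card_imset ?cardsC1 // => u w [].
have cB : #|B| = #|I|.-1.
  by rewrite card_imset ?cardsC1 // => u w [].
have AB : A :&: B = set0.
  apply/setP=> p; rewrite !inE; apply/negP=> /andP[/imsetP[v hv ->] /imsetP[w hw [e1 e2]]].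
  move: hv hw; rewrite !inE => hv hw.
  have /andP[_ h1] := parP v hv; have /andP[_ h2] := parP w hw.
  by move: h1 h2; rewrite e1 -e2; move=> h1 h2; have := ltn_trans h1 h2; rewrite ltnn.
have sub : A :|: B \subset [set p : I * I | r p.1 p.2].
  apply/subsetP=> p; rewrite !inE => /orP[/imsetP[v hv ->]|/imsetP[v hv ->]] /=;
  move: hv; rewrite !inE => hv; have /andP[h _] := parP v hv => //.
  by rewrite rsym.
have := subset_leq_card sub; rewrite cardsU AB cards0 subn0 cA cB.
by rewrite -subn1 mul2n -addnn.
Qed.

Definition rmedge (te : rel I) (a b : I) :=
  [rel u w | te u w && ~~((u == a) && (w == b)) && ~~((u == b) && (w == a))].

Lemma rmedge_sym te a b : symmetric te -> symmetric (rmedge te a b).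
Proof.
move=> tsym u w; rewrite /= tsym.
by rewrite [(w == a) && _]andbC [(w == b) && _]andbC -!andbA [X in te w u && X]andbC.
Qed.

Lemma tree_cut (te : rel I) a b : is_tree te -> te a b -> ~~ connect (rmedge te a b) a b.
Proof.
case=> tsym tirr n0 tcon tcard hab; apply/negP=> cab.
have Gsym := rmedge_sym a b tsym.
have conn : forall u w, connect (rmedge te a b) u w.
  move=> u w; have /connectP[p pp ->] := tcon u w.
  elim: p u pp => [|c p IH] u /=; first by rewrite connect0.
  case/andP=> uc pp; apply: connect_trans (IH c pp).
  case h: (rmedge te a b u c); first by rewrite connect1.
  move: h; rewrite /= uc /= => /negbT; rewrite negb_and !negbK.
  case/orP=> /andP[/eqP-> /eqP->] //.
  by rewrite (sym_connect_sym Gsym).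
have := conn_edges a Gsym conn.
have ab : a != b by apply/eqP=> eab; rewrite eab tirr in hab.
have n2 : 2 <= #|I|.
  by have := max_card (mem [set a; b]); rewrite cards2 ab.
set E := [set p : I * I | te p.1 p.2].
have -> : [set p : I * I | rmedge te a b p.1 p.2] = E :\ (a, b) :\ (b, a).
  apply/setP=> [[u w]]; rewrite !inE /= !xpair_eqE.
  by case: (te u w); case: (u==a); case: (u==b); case: (w==a); case: (w==b).
have i1 : (a, b) \in E by rewrite inE.
have i2 : (b, a) \in E :\ (a, b) by rewrite !inE /= xpair_eqE eq_sym (negbTE ab) tsym.
have e1 := cardsD1 (a, b) E.
have e2 := cardsD1 (b, a) (E :\ (a, b)).
rewrite i1 in e1; rewrite i2 in e2.
move: e1 e2; rewrite {1}/E tcard.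
move: n2; set m := #|_ :\ _ :\ _|; set k := #|E :\ _|; set n := #|I|.
move=> n2 e1 e2 h.
have : 2 * (n-1) = (1 + (1 + m)) by rewrite e1 e2.
move=> e; move: h; rewrite e; by rewrite add1n add1n ltnNge leqnSn.
Qed.

End Cut.
Section Main.
Variables (T : finType) (e : rel T) (V : {set T}) (I : finType) (te : rel I)
  (bag : I -> {set T}).
Hypothesis tree : is_tree te.
Hypothesis hcov : forall v, v \in V -> exists i, v \in bag i.
Hypothesis hedge : forall u v, u \in V -> v \in V -> e u v ->
            exists i, (u \in bag i) && (v \in bag i).
Hypothesis hconn : forall v i j, v \in bag i -> v \in bag j ->
            connect [rel a b | te a b && (v \in bag a) && (v \in bag b)] i j.
Hypothesis hsize : forall i, #|bag i| <= 3.

Definition Rx (x : T) := [rel u w | te u w && (x \notin bag u) && (x \notin bag w)].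

Lemma first_cross x j s : x \notin bag j -> path te j s -> x \in bag (last j s) ->
  exists a b, [/\ te b a, x \in bag a, x \notin bag b & connect (Rx x) j b].
Proof.
elim: s j => [|c s IH] j /=; first by move=> h _ h'; rewrite h' in h.
move=> xj /andP[jc pc] xl.
case xc: (x \in bag c).
  by exists c, j; split => //; rewrite connect0.
have [a [b [h1 h2 h3 h4]]] := IH c (negbT xc) pc xl.
exists a, b; split => //; apply: connect_trans h4; apply: connect1.
by rewrite /= jc xj xc.
Qed.

Lemma sub_G' a b x : x \in bag a -> subrel (Rx x) (rmedge te a b).
Proof.
move=> xa u w /= /andP[/andP[tuw xu] xw]; rewrite tuw /=.
have ua : (u == a) = false by apply/negbTE; apply: contraNneq xu => ->.
have wa : (w == a) = false by apply/negbTE; apply: contraNneq xw => ->.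
by rewrite ua wa andbF.
Qed.

Lemma stay a b v i j : v \notin bag a :&: bag b -> v \in bag i -> v \in bag j ->
  connect (rmedge te a b) i j.
Proof.
move=> vZ vi vj; apply: (connect_sub _ (hconn vi vj)).
move=> u w /= /andP[/andP[tuw vu] vw]; apply: connect1; rewrite /= tuw /=.
apply/andP; split; apply/negP=> /andP[/eqP eu /eqP ew]; move: vZ;
  by rewrite inE -?eu -?ew ?vu ?vw // -ew -eu vu vw.
Qed.

Definition Aside a b v := exists i, (v \in bag i) && connect (rmedge te a b) a i.

Lemma walk a b u s : u \in V -> u \notin bag a :&: bag b -> Aside a b u -> path e u s ->
  all (fun v => (v \in V) && (v \notin bag a :&: bag b)) s -> Aside a b (last u s).
Proof.
elim: s u => [|c s IH] u //= uV uZ [i /andP[ui ci]] /andP[euc pc] /andP[/andP[cV cZ] hall].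
apply: IH => //.
have [k /andP[uk ck]] := hedge uV cV euc.
exists k; rewrite ck /=; apply: connect_trans ci _.
exact: stay uZ ui uk.
Qed.

Lemma common_bag (S : {set T}) x y m (P : 'I_m -> seq T) :
  V = ~: S -> #|S| + 2 < m -> x \in V -> y \in V ->
  (forall i, xy_path e x y (P i)) ->
  (forall i j, i != j -> forall v, v \in P i -> v \notin P j) ->
  exists i, (x \in bag i) && (y \in bag i).
Proof.
move=> VS hm xV yV hP hdis.
case: (boolP [exists i, (x \in bag i) && (y \in bag i)]) => [/existsP//|/existsPn H].
case: tree => tsym tirr n0 tcon tcard.
have [i0 xi0] := hcov xV; have [j0 yj0] := hcov yV.
have xj0 : x \notin bag j0 by have := H j0; rewrite yj0 andbT.
have /connectP[p pp lp] := tcon j0 i0.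
rewrite lp in xi0.
have [a [b [tba xa xb cjb]]] := first_cross xj0 pp xi0.
have tab : te a b by rewrite tsym.
have cut := tree_cut tree tab.
set Z := bag a :&: bag b.
have Zsz : #|Z| <= 2.
  have : Z \subset bag a :\ x.
    apply/subsetP=> v; rewrite !inE => /andP[va vb]; rewrite va andbT.
    by apply: contraNneq xb => <-.
  move/subset_leq_card; have := cardsD1 x (bag a); rewrite xa add1n => e1.
  have := hsize a; rewrite e1 ltnS => h1 h2; exact: leq_trans h2 h1.
have ya : y \notin bag a by have := H a; rewrite xa.
have yZ : y \notin Z by rewrite inE negb_and ya.
have xZ : x \notin Z by rewrite inE negb_and xb orbT.
have hit : forall k, exists v, (v \in P k) && (v \in S :|: Z).
  move=> k; case: (boolP (has (fun v => v \in S :|: Z) (P k))) => [/hasP[v h1 h2]|/hasPn hn].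
    by exists v; rewrite h1.
  exfalso; have [pk _] := hP k.
  have := walk xV xZ _ pk.
  case.
  - by exists a; rewrite xa connect0.
  - apply/allP=> v; rewrite mem_rcons inE => /orP[/eqP->|vP]; first by rewrite yV yZ.
    by have := hn v vP; rewrite inE negb_or => /andP[vS vZ]; rewrite VS inE vS vZ.
  rewrite last_rcons => i1 /andP[yi1 ci1].
  have c2 := stay yZ yi1 yj0.
  have c3 : connect (rmedge te a b) j0 b.
    by apply: (connect_sub _ cjb) => u w h; apply: connect1; exact: (sub_G' b xa h).
  by move: cut; rewrite (connect_trans ci1 (connect_trans c2 c3)).
pose g k := odflt x [pick v | (v \in P k) && (v \in S :|: Z)].
have gP k : (g k \in P k) && (g k \in S :|: Z).
  rewrite /g; case: pickP => [v // | none].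
  by have [v hv] := hit k; rewrite none in hv.
have ginj : injective g.
  move=> k l gkl; apply/eqP; apply/negPn/negP => kl.
  have /andP[gk _] := gP k; have /andP[gl _] := gP l.
  by move: (hdis k l kl _ gk); rewrite gkl gl.
have : [set g k | k in 'I_m] \subset S :|: Z.
  by apply/subsetP=> v /imsetP[k _ ->]; have /andP[_ ->] := gP k.
move/subset_leq_card; rewrite card_imset // card_ord cardsU => h.
have : m <= #|S| + #|Z| by apply: leq_trans h (leq_subr _ _).
move=> h2; have := leq_trans h2 (leq_add (leqnn #|S|) Zsz).
by rewrite leqNgt hm.
Qed.

End Main.

Theorem mainTheorem6 (T : finType) (e : rel T) (t : nat) (x y : T) :
  simple_graph e -> x != y -> ~~ e x y ->
  m_disjoint_paths e x y (t + 3) ->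
  (has_solution e t <-> has_solution (add_edge e x y) t).
Proof.
move=> _ _ _ [P [hP hdis]]; split.
  case=> S [hS [I [te [bag [tr [h1 h2 h3 h4 h5]]]]]].
  exists S; split => //; exists I, te, bag; split => //; split => //.
  have hm : #|S| + 2 < t + 3 by apply: (leq_ltn_trans (leq_add hS (leqnn 2))); rewrite ltn_add2l.
  move=> u v uV vV /= /orP[euv|/orP[/andP[/eqP eu /eqP ev]|/andP[/eqP eu /eqP ev]]].
  - exact: h3.
  - rewrite eu ev in uV vV *.
    exact: (common_bag tr h2 h3 h4 h5 (erefl (~: S)) hm uV vV hP hdis).
  - rewrite eu ev in uV vV *.
    have [i hi] := common_bag tr h2 h3 h4 h5 (erefl (~: S)) hm vV uV hP hdis.
    by exists i; rewrite andbC.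
case=> S [hS [I [te [bag [tr [h1 h2 h3 h4 h5]]]]]].
exists S; split => //; exists I, te, bag; split => //; split => //.
by move=> u v uV vV euv; apply: h3 => //; rewrite /add_edge /= euv.
Qed.
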